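(* Let $(G_n)_{n\in\mathbb N}$ be a sequence of finite graphs that converges elementarily to some ultra-homogeneous graph $\hat G$. Then the following are equivalent: (i) $(G_n)$ is $\mathrm{FO}$-convergent; (ii) $(G_n)$ is $\mathrm{QF}$-convergent; (iii) $(G_n)$ is L-convergent.
   Context: For a first-order graph formula $\phi$ with free variables among $x_1,\dots,x_p$ and a finite graph $G$, $\langle\phi,G\rangle=|\{(v_1,\dots,v_p)\in V(G)^p:G\models\phi(v_1,\dots,v_p)\}|/|G|^p$. $(G_n)$ is $X$-convergent (for a set $X$ of formulas) if $\langle\phi,G_n\rangle$ converges for all $\phi\in X$; FO is the set of all first-order formulas and QF the set of quantifier-free formulas (using adjacency and equality). $(G_n)$ is L-convergent if $\hom(F,G_n)/|G_n|^{|F|}$ converges for every finite graph $F$. $(G_n)$ converges elementarily to a (finite or countable) graph $\hat G$ if for every first-order sentence $\theta$, $\hat G\models\theta$ iff $G_n\models\theta$ for all sufficiently large $n$. A graph is ultra-homogeneous if every isomorphism between finite induced subgraphs extends to an automorphism of the graph. *)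

(* Defs.v *)
From HB Require Import structures.
From mathcomp Require Import all_boot.
From Stdlib Require Import Reals ClassicalEpsilon.

Set Implicit Arguments.
Unset Strict Implicit.
Unset Printing Implicit Defensive.

Record fin_graph := FGraph {
  fV :> finType;
  fadj : rel fV;
  fadj_sym : symmetric fadj;
  fadj_irr : irreflexive fadj }.

Record cnt_graph := CGraph {
  cV :> countType;
  cadj : cV -> cV -> Prop;
  cadj_sym : forall x y, cadj x y -> cadj y x;
  cadj_irr : forall x, ~ cadj x x }.

Inductive form :=
  | FAdj of nat & nat
  | FEq of nat & nat
  | FNot of form
  | FAnd of form & form
  | FOr of form & form
  | FEx of nat & form
  | FAll of nat & form.

Definition upd (T : Type) (e : nat -> T) (i : nat) (x : T) : nat -> T :=
  fun k => if k == i then x else e k.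

Fixpoint sat (T : Type) (adj : T -> T -> Prop) (e : nat -> T) (f : form) : Prop :=
  match f with
  | FAdj i j => adj (e i) (e j)
  | FEq i j => e i = e j
  | FNot g => ~ sat adj e g
  | FAnd g h => sat adj e g /\ sat adj e h
  | FOr g h => sat adj e g \/ sat adj e h
  | FEx i g => exists x : T, sat adj (upd e i x) g
  | FAll i g => forall x : T, sat adj (upd e i x) g
  end.

Fixpoint free (f : form) (k : nat) : bool :=
  match f with
  | FAdj i j | FEq i j => (k == i) || (k == j)
  | FNot g => free g k
  | FAnd g h | FOr g h => free g k || free h k
  | FEx i g | FAll i g => (k != i) && free g k
  end.

Definition fv_below (p : nat) (f : form) : Prop := forall k, free f k -> (k < p)%N.

Definition sentence (f : form) : Prop := fv_below 0 f.

Fixpoint qf (f : form) : bool :=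
  match f with
  | FAdj _ _ | FEq _ _ => true
  | FNot g => qf g
  | FAnd g h | FOr g h => qf g && qf h
  | FEx _ _ | FAll _ _ => false
  end.

Definition fmodels (G : fin_graph) (th : form) : Prop :=
  forall e : nat -> G, sat (fun x y => fadj x y) e th.
Definition cmodels (G : cnt_graph) (th : form) : Prop :=
  forall e : nat -> G, sat (@cadj G) e th.

Definition pb (P : Prop) : bool := if excluded_middle_informative P then true else false.

(* <phi, G> for phi with free variables among x_0..x_{p-1}:
   |{ (v_0..v_{p-1}) in V^p : G |= phi(v) }| / |G|^p *)
Definition density (p : nat) (f : form) (G : fin_graph) : R :=
  (INR #|[set t : {ffun 'I_p -> G} |
            pb (exists e : nat -> G, (forall i : 'I_p, e i = t i) /\
                                     sat (fun x y => fadj x y) e f)]|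
   / INR (expn #|G| p))%R.

Definition convergent (u : nat -> R) : Prop := exists l : R, Un_cv u l.

Definition FO_convergent (G : nat -> fin_graph) : Prop :=
  forall (p : nat) (f : form), fv_below p f -> convergent (fun n => density p f (G n)).
Definition QF_convergent (G : nat -> fin_graph) : Prop :=
  forall (p : nat) (f : form), qf f -> fv_below p f ->
    convergent (fun n => density p f (G n)).

Definition hom (F G : fin_graph) : nat :=
  #|[set h : {ffun F -> G} | [forall x, forall y, fadj x y ==> fadj (h x) (h y)]]|.

Definition L_convergent (G : nat -> fin_graph) : Prop :=
  forall F : fin_graph, convergent (fun n => (INR (hom F (G n)) / INR (expn #|G n| #|F|))%R).

Definition elem_converges (G : nat -> fin_graph) (H : cnt_graph) : Prop :=
  forall th : form, sentence th ->
    (cmodels H th <-> exists N, forall n, (N <= n)%N -> fmodels (G n) th).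

(* every isomorphism between finite induced subgraphs extends to an automorphism;
   a finite induced subgraph is given by a finite vertex list A, and an
   isomorphism onto the induced subgraph on f(A) by a map f injective on A
   preserving adjacency and non-adjacency *)
Definition ultra_homogeneous (H : cnt_graph) : Prop :=
  forall (A : seq H) (f : H -> H),
    {in A &, injective f} ->
    (forall x y, x \in A -> y \in A -> (cadj x y <-> cadj (f x) (f y))) ->
    exists g : H -> H,
      bijective g /\ (forall x y, cadj x y <-> cadj (g x) (g y)) /\
      (forall x, x \in A -> g x = f x).

(* Main.v *)
From Stdlib Require Import Reals Lra ClassicalEpsilon FunctionalExtensionality PropExtensionality Classical.
Require Import Defs.
From mathcomp Require Import all_boot.
Set Implicit Arguments. Unset Strict Implicit. Unset Printing Implicit Defensive.

Lemma sat_ext T (adj : T -> T -> Prop) (e e' : nat -> T) f :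
  (forall k, free f k -> e k = e' k) -> (sat adj e f <-> sat adj e' f).
Proof.
elim: f e e' => [i j|i j|g IH|g IHg h IHh|g IHg h IHh|i g IH|i g IH] e e' He /=.
- by rewrite !He //= eqxx ?orbT.
- by rewrite !He //= eqxx ?orbT.
- by rewrite (IH e e').
- have A := IHg e e' (fun k Hk => He k (introT orP (or_introl Hk))).
  have B := IHh e e' (fun k Hk => He k (introT orP (or_intror Hk))). tauto.
- have A := IHg e e' (fun k Hk => He k (introT orP (or_introl Hk))).
  have B := IHh e e' (fun k Hk => He k (introT orP (or_intror Hk))). tauto.
- have E x : sat adj (upd e i x) g <-> sat adj (upd e' i x) g.
    apply: IH => k Hk; rewrite /upd; case: eqP => // /eqP ki; apply: He; by rewrite /= ki.
  by split=> -[x Hx]; exists x; apply/E.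
- have E x : sat adj (upd e i x) g <-> sat adj (upd e' i x) g.
    apply: IH => k Hk; rewrite /upd; case: eqP => // /eqP ki; apply: He; by rewrite /= ki.
  by split=> Hx x; apply/E.
Qed.

Lemma sat_auto T (adj : T -> T -> Prop) (g : T -> T) e f :
  bijective g -> (forall x y, adj x y <-> adj (g x) (g y)) ->
  (sat adj e f <-> sat adj (g \o e) f).
Proof.
move=> [gi gK Kg] Hadj.
have U i x e0 : g \o upd e0 i x = upd (g \o e0) i (g x).
  by apply: functional_extensionality => k; rewrite /upd /=; case: (k == i).
elim: f e => [i j|i j|f IH|f IHf h IHh|f IHf h IHh|i f IH|i f IH] e /=.
- exact: Hadj.
- split=> [->//|]. by move/(congr1 gi); rewrite !gK.
- by rewrite IH.
- by rewrite IHf IHh.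
- by rewrite IHf IHh.
- split=> -[x Hx].
    by exists (g x); rewrite -U -IH.
  by exists (gi x); rewrite IH U Kg.
- split=> Hx x.
    by rewrite -(Kg x) -U -IH.
  by rewrite IH U.
Qed.

Definition closeAll (l : seq nat) g := foldr FAll g l.
Definition closeEx (l : seq nat) g := foldr FEx g l.

Lemma free_closeAll l g k : free (closeAll l g) k = (k \notin l) && free g k.
Proof. elim: l => [|i l IH] //=. by rewrite IH in_cons negb_or andbA. Qed.
Lemma free_closeEx l g k : free (closeEx l g) k = (k \notin l) && free g k.
Proof. elim: l => [|i l IH] //=. by rewrite IH in_cons negb_or andbA. Qed.

Lemma sat_closeAll T (adj : T -> T -> Prop) l g e :
  sat adj e (closeAll l g) <-> forall e', (forall k, k \notin l -> e' k = e k) -> sat adj e' g.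
Proof.
elim: l e => [|i l IH] e /=.
  split=> [H e' He|H]; last by apply: H => k.
  by have -> : e' = e by apply: functional_extensionality => k; apply: He.
split=> [H e' He|H x].
  move: (H (e' i)); rewrite IH; apply=> k kl; rewrite /upd.
  case: eqP => [->//|/eqP ki]; apply: He; by rewrite in_cons negb_or ki.
rewrite IH => e' He; apply: H => k; rewrite in_cons negb_or => /andP[ki kl].
by rewrite He // /upd (negbTE ki).
Qed.

Lemma sat_closeEx T (adj : T -> T -> Prop) l g e :
  sat adj e (closeEx l g) <-> exists e', (forall k, k \notin l -> e' k = e k) /\ sat adj e' g.
Proof.
elim: l e => [|i l IH] e /=.
  split=> [H|[e' [He H]]]; first by exists e.
  by have <- : e' = e by apply: functional_extensionality => k; apply: He.
split=> [[x /IH [e' [He H]]]|[e' [He H]]].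
  exists e'; split=> // k; rewrite in_cons negb_or => /andP[ki kl].
  by rewrite He // /upd (negbTE ki).
exists (e' i); apply/IH; exists e'; split=> // k kl; rewrite /upd.
case: eqP => [->//|/eqP ki]; apply: He; by rewrite in_cons negb_or ki.
Qed.

Definition bigAnd (X : Type) (s : seq X) (F : X -> form) (t : form) :=
  foldr (fun x acc => FAnd (F x) acc) t s.
Definition bigOr (X : Type) (s : seq X) (F : X -> form) (b : form) :=
  foldr (fun x acc => FOr (F x) acc) b s.

Lemma sat_bigAnd T (adj : T -> T -> Prop) e (X : eqType) (s : seq X) F t :
  sat adj e (bigAnd s F t) <-> sat adj e t /\ forall x, x \in s -> sat adj e (F x).
Proof.
elim: s => [|x s IH] /=; first by split=> [H|[]//]; split.
rewrite IH; split=> [[Hx [Ht Hs]]|[Ht Hs]]; last first.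
  split; first by apply: Hs; rewrite mem_head.
  by split=> // y ys; apply: Hs; rewrite in_cons ys orbT.
by split=> // y; rewrite in_cons => /orP[/eqP->|]; auto.
Qed.

Lemma sat_bigOr T (adj : T -> T -> Prop) e (X : eqType) (s : seq X) F b :
  sat adj e (bigOr s F b) <-> sat adj e b \/ exists2 x, x \in s & sat adj e (F x).
Proof.
elim: s => [|x s IH] /=; first by split=> [H|[H|[x]]] //; left.
rewrite IH; split=> [[Hx|[Hb|[y ys Hy]]]|[Hb|[y]]].
- by right; exists x => //; rewrite mem_head.
- by left.
- by right; exists y => //; rewrite in_cons ys orbT.
- by right; left.
- rewrite in_cons => /orP[/eqP->|ys Hy]; first by left.
  by right; right; exists y.
Qed.

Lemma free_bigAnd (X : eqType) (s : seq X) F t k :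
  free (bigAnd s F t) k -> free t k \/ exists2 x, x \in s & free (F x) k.
Proof.
elim: s => [|x s IH] /=; first by left.
case/orP=> [H|/IH [H|[y ys Hy]]]; [right; exists x => //; exact: mem_head| by left|].
right; exists y => //; by rewrite in_cons ys orbT.
Qed.

Lemma free_bigOr (X : eqType) (s : seq X) F t k :
  free (bigOr s F t) k -> free t k \/ exists2 x, x \in s & free (F x) k.
Proof.
elim: s => [|x s IH] /=; first by left.
case/orP=> [H|/IH [H|[y ys Hy]]]; [right; exists x => //; exact: mem_head| by left|].
right; exists y => //; by rewrite in_cons ys orbT.
Qed.

Lemma qf_bigAnd (X : Type) (s : seq X) F t : qf t -> (forall x, qf (F x)) -> qf (bigAnd s F t).
Proof. by move=> Ht HF; elim: s => //= x s ->; rewrite HF. Qed.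
Lemma qf_bigOr (X : Type) (s : seq X) F t : qf t -> (forall x, qf (F x)) -> qf (bigOr s F t).
Proof. by move=> Ht HF; elim: s => //= x s ->; rewrite HF. Qed.

Lemma pbE (P : Prop) : pb P = true <-> P.
Proof. by rewrite /pb; case: excluded_middle_informative. Qed.
Lemma pbF (P : Prop) : pb P = false <-> ~ P.
Proof. by rewrite /pb; case: excluded_middle_informative. Qed.
Lemma pb_iff (P Q : Prop) : (P <-> Q) -> pb P = pb Q.
Proof. by move=> H; rewrite (propositional_extensionality P Q H). Qed.

Lemma sentence_indep T (adj : T -> T -> Prop) th e e' :
  sentence th -> (sat adj e th <-> sat adj e' th).
Proof. by move=> Hs; apply: sat_ext => k /Hs. Qed.

Lemma cmodels_dich (H : cnt_graph) th : sentence th -> cmodels H th \/ cmodels H (FNot th).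
Proof.
move=> Hs; case: (classic (exists e, ~ sat (@cadj H) e th)) => [[e He]|He].
  by right=> e' /=; rewrite (sentence_indep _ e' e Hs).
left=> e; apply: NNPP => H1; apply: He; by exists e.
Qed.

Lemma conv_evt (u v : nat -> R) : (exists N, forall n, (N <= n)%N -> u n = v n) ->
  convergent v -> convergent u.
Proof.
move=> [N HN] [l Hl]; exists l => eps Heps; have [M HM] := Hl eps Heps.
exists (maxn N M) => n Hn; move/leP: Hn => Hn.
rewrite HN; last by apply: leq_trans Hn; rewrite leq_maxl.
apply: HM; apply/leP; exact: leq_trans (leq_maxr N M) Hn.
Qed.
Lemma conv_ext (u v : nat -> R) : (forall n, u n = v n) -> convergent v -> convergent u.
Proof. by move=> H; apply: conv_evt; exists 0%N. Qed.
Lemma conv_plus u v : convergent u -> convergent v -> convergent (fun n => Rplus (u n) (v n)).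
Proof. by move=> [a Ha] [b Hb]; exists (Rplus a b); apply: CV_plus. Qed.
Lemma conv_minus u v : convergent u -> convergent v -> convergent (fun n => Rminus (u n) (v n)).
Proof. by move=> [a Ha] [b Hb]; exists (Rminus a b); apply: CV_minus. Qed.
Lemma conv_mult u v : convergent u -> convergent v -> convergent (fun n => Rmult (u n) (v n)).
Proof. by move=> [a Ha] [b Hb]; exists (Rmult a b); apply: CV_mult. Qed.
Lemma conv_const c : convergent (fun _ => c).
Proof. exists c => eps He; exists 0%N => n _; rewrite /R_dist Rminus_diag Rabs_R0; lra. Qed.
Lemma conv_pow u k : convergent u -> convergent (fun n => pow (u n) k).
Proof.
move=> Hu; elim: k => [|k IH] /=; first exact: conv_const.
exact: conv_mult.
Qed.

Definition diag T (adj : T -> T -> Prop) p (e : nat -> T) : {ffun 'I_p * 'I_p -> bool * bool} :=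
  [ffun ij : 'I_p * 'I_p => (pb (adj (e ij.1) (e ij.2)), pb (e ij.1 = e ij.2))].
Definition lit (b : bool) g := if b then g else FNot g.
Definition diagF p (d : {ffun 'I_p * 'I_p -> bool * bool}) :=
  bigAnd (enum {: 'I_p * 'I_p}) (fun ij : 'I_p * 'I_p => FAnd (lit (d ij).1 (FAdj (nat_of_ord ij.1) (nat_of_ord ij.2))) (lit (d ij).2 (FEq (nat_of_ord ij.1) (nat_of_ord ij.2)))) (FEq 0 0).

Lemma pb_eq (P : Prop) (b : bool) : pb P = b <-> (P <-> b).
Proof.
rewrite /pb; case: excluded_middle_informative => HP; case: b; split=> //.
all: try tauto.
all: try (by move=> [h1 h2]; have := h1 HP).
all: try (by move=> [h1 h2]; case: HP; apply: h2).
Qed.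
Lemma pb_inj (P Q : Prop) : pb P = pb Q -> (P <-> Q).
Proof. rewrite /pb; do 2 case: excluded_middle_informative => //; tauto. Qed.

Lemma sat_lit T (adj : T -> T -> Prop) e b g : sat adj e (lit b g) <-> (sat adj e g <-> b).
Proof. by case: b => /=; intuition. Qed.

Lemma sat_diagF T (adj : T -> T -> Prop) p (e : nat -> T) d :
  sat adj e (diagF d) <-> diag adj p e = d.
Proof.
rewrite /diagF sat_bigAnd /=; split=> [[_ H]|<-].
  apply/ffunP => ij; rewrite ffunE; have := H ij; rewrite mem_enum => /(_ isT) /=.
  rewrite !sat_lit /=; case: (d ij) => b1 b2 /= [h1 h2].
  by congr pair; apply/pb_eq.
split=> // ij _ /=; rewrite !ffunE /= !sat_lit /=; split; apply/pb_eq; by [].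
Qed.

Lemma free_diagF p d k : 0 < p -> free (@diagF p d) k -> k < p.
Proof.
have Hl b g : free (lit b g) k = free g k by case: b.
move=> p0 /free_bigAnd [/=|[ij _]]; first by rewrite orbb => /eqP->.
rewrite /= !Hl /=; case/orP => /orP[] /eqP->; exact: ltn_ord.
Qed.
Lemma qf_diagF p d : qf (@diagF p d).
Proof. apply: qf_bigAnd => // ij; by case: (d ij) => [[] []]. Qed.

Lemma uh_diag (H : cnt_graph) p f (e e' : nat -> H) : ultra_homogeneous H -> fv_below p f ->
  diag (@cadj H) p e = diag (@cadj H) p e' -> (sat (@cadj H) e f <-> sat (@cadj H) e' f).
Proof.
move=> uh fvf Hdiag.
have Hd i j : i < p -> j < p -> (cadj (e i) (e j) <-> cadj (e' i) (e' j)) /\ (e i = e j <-> e' i = e' j).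
  move=> hi hj; have := congr1 (fun d : {ffun 'I_p * 'I_p -> bool * bool} => d (Ordinal hi, Ordinal hj)) Hdiag; rewrite !ffunE /=.
  by move=> [E1 E2]; split; apply: pb_inj.
pose A := map e (iota 0 p).
pose fm := fun x => nth x (map e' (iota 0 p)) (index x A).
have fmE i : i < p -> fm (e i) = e' i.
  move=> hi; have hin : e i \in A by apply: map_f; rewrite mem_iota.
  have hj : index (e i) A < p by rewrite -index_mem size_map size_iota in hin.
  have Hj := nth_index (e i) hin.
  rewrite /A (nth_map 0) ?size_iota // nth_iota // add0n in Hj.
  rewrite /fm (nth_map 0) ?size_iota // nth_iota // add0n.
  by apply/(Hd _ _ hj hi).2.
have inA x : x \in A -> exists2 i, i < p & x = e i.
  by case/mapP => i; rewrite mem_iota add0n => /andP[_ hi] ->; exists i.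
have [g [bij [Hadj Hext]]] : exists g : H -> H,
    bijective g /\ (forall x y, cadj x y <-> cadj (g x) (g y)) /\ (forall x, x \in A -> g x = fm x).
  apply: uh.
    move=> x y /inA [i hi ->] /inA [j hj ->]; rewrite !fmE // => E.
    by apply/(Hd _ _ hi hj).2.
  move=> x y /inA [i hi ->] /inA [j hj ->]; rewrite !fmE //; exact: (Hd _ _ hi hj).1.
rewrite (sat_auto e f bij Hadj); apply: sat_ext => k /fvf hk /=.
rewrite Hext ?fmE //; apply: map_f; by rewrite mem_iota.
Qed.

Definition psi (H : cnt_graph) p f :=
  bigOr [seq d <- enum {ffun 'I_p * 'I_p -> bool * bool} |
          pb (exists e0 : nat -> H, diag (@cadj H) p e0 = d /\ sat (@cadj H) e0 f)]
        (@diagF p) (FNot (FEq 0 0)).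

Lemma sat_psi (H : cnt_graph) p f e : ultra_homogeneous H -> fv_below p f ->
  (sat (@cadj H) e f <-> sat (@cadj H) e (psi H p f)).
Proof.
move=> uh fvf; rewrite /psi sat_bigOr /=; split=> [Hf|[//|[d]]].
  right; exists (diag (@cadj H) p e); last exact/sat_diagF.
  rewrite mem_filter mem_enum andbT; apply/pbE; by exists e.
rewrite mem_filter => /andP[/pbE [e0 [<- H0]] _] /sat_diagF Hd.
exact: (proj2 (uh_diag uh fvf Hd) H0).
Qed.

Lemma free_psi H p f k : 0 < p -> free (psi H p f) k -> k < p.
Proof.
move=> p0 /free_bigOr [/= /orP[]/eqP->//|[d _]]; exact: free_diagF.
Qed.
Lemma qf_psi H p f : qf (psi H p f).
Proof. apply: qf_bigOr => //; exact: qf_diagF. Qed.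

Lemma partA (G : nat -> fin_graph) (H : cnt_graph) p f : 0 < p ->
  elem_converges G H -> ultra_homogeneous H -> QF_convergent G -> fv_below p f ->
  convergent (fun n => density p f (G n)).
Proof.
move=> p0 ec uh qc fvf.
pose ps := psi H p f.
pose th := closeAll (iota 0 p) (FAnd (FOr (FNot f) ps) (FOr (FNot ps) f)).
have sth : sentence th.
  move=> k; rewrite free_closeAll mem_iota add0n /= => /andP[/negP nk Hk]; exfalso; apply: nk.
  have : k < p by move: Hk; rewrite -!orbA => /or4P[/fvf|/(free_psi p0)|/(free_psi p0)|/fvf].
  by [].
have iffE T adj e : sat adj e (FAnd (FOr (FNot f) ps) (FOr (FNot ps) f)) <->
                    (sat (T:=T) adj e f <-> sat adj e ps).
  by simpl; split; [case=> [[?|?] [?|?]]; tauto | move=> h; split; case: (classic (sat adj e f)); tauto].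
have [N HN] : exists N, forall n, (N <= n)%N -> fmodels (G n) th.
  apply/ec => //= e; apply/sat_closeAll => e' _; apply/iffE; exact: sat_psi.
apply: (@conv_evt _ (fun n => density p ps (G n))); last first.
  apply: qc; [exact: qf_psi| move=> k; exact: free_psi].
exists N => n Hn; rewrite /density; congr Rdiv; congr INR.
apply: eq_card => t; rewrite !inE; apply: pb_iff.
have Hi (e : nat -> G n) : sat (fun x y : G n => fadj x y) e f <-> sat (fun x y : G n => fadj x y) e ps.
  by have := HN n Hn e; move/sat_closeAll => /(_ e (fun _ _ => erefl)) /iffE.
by split=> -[e [He Hs]]; exists e; split => //; apply/Hi.
Qed.

Lemma dens01 (G : fin_graph) f : sentence f -> density 0 f G = density 1 f G.
Proof.
move=> sf; rewrite /density.
case: (classic (exists e : nat -> G, sat (fun x y => fadj x y) e f)) => [[e0 He0]|Hn].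
  have -> : [set t : {ffun 'I_0 -> G} | pb (exists e : nat -> G, (forall i : 'I_0, e i = t i) /\
                                     sat (fun x y => fadj x y) e f)] = setT.
    apply/setP => t; rewrite !inE; apply/pbE; exists e0; split=> // -[]//.
  have -> : [set t : {ffun 'I_1 -> G} | pb (exists e : nat -> G, (forall i : 'I_1, e i = t i) /\
                                     sat (fun x y => fadj x y) e f)] = setT.
    apply/setP => t; rewrite !inE; apply/pbE; exists (fun _ => t ord0); split.
      by move=> i; rewrite (ord1 i).
    exact: (proj1 (sentence_indep _ _ _ sf) He0).
  have Gp : INR #|G| <> R0.
    apply: not_0_INR; apply/eqP; rewrite -lt0n; apply/card_gt0P.
    by exists (e0 0).
  rewrite !cardsT !card_ffun !card_ord expn0 expn1 /Rdiv (Rinv_r (INR #|G|) Gp).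
  rewrite Rinv_r //=; exact: R1_neq_R0.
have E : forall p, [set t : {ffun 'I_p -> G} | pb (exists e : nat -> G, (forall i : 'I_p, e i = t i) /\
                                     sat (fun x y => fadj x y) e f)] = set0.
  move=> p; apply/setP => t; rewrite !inE; apply/pbF => -[e [_ He]]; apply: Hn; by exists e.
by rewrite !E !cards0 /Rdiv !Rmult_0_l.
Qed.

Definition phiF (F : fin_graph) :=
  bigAnd [seq ij <- enum {: 'I_#|F| * 'I_#|F|} | fadj (enum_val ij.1) (enum_val ij.2)]
         (fun ij : 'I_#|F| * 'I_#|F| => FAdj (nat_of_ord ij.1) (nat_of_ord ij.2)) (FEq 0 0).

Lemma qf_phiF (F : fin_graph) : qf (phiF F).
Proof. exact: qf_bigAnd. Qed.
Lemma fv_phiF (F : fin_graph) : 0 < #|F| -> fv_below #|F| (phiF F).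
Proof.
move=> p0 k /free_bigAnd [/= /orP[]/eqP->//|[ij _ /=]].
by case/orP=> /eqP->.
Qed.

Lemma hom_card (F G : fin_graph) (H0 : 0 < #|F|) :
  #|[set t : {ffun 'I_#|F| -> G} | pb (exists e : nat -> G, (forall i : 'I_#|F|, e i = t i) /\
                                     sat (fun x y => fadj x y) e (phiF F))]| = hom F G.
Proof.
pose M := fun h : {ffun F -> G} => [ffun i : 'I_#|F| => h (enum_val i)].
have injM : injective M.
  move=> h1 h2 E; apply/ffunP => x; have := congr1 (fun t : {ffun 'I_#|F| -> G} => t (enum_rank x)) E.
  by rewrite !ffunE enum_rankK.
rewrite /hom -(card_imset _ injM); apply: eq_card => t; rewrite !inE.
apply/idP/imsetP.
  move=> /pbE [e [Het /sat_bigAnd [_ Hs]]].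
  exists [ffun x => t (enum_rank x)].
    rewrite inE; apply/forallP => x; apply/forallP => y; apply/implyP => Hxy; rewrite !ffunE.
    have := Hs (enum_rank x, enum_rank y); rewrite mem_filter /= !enum_rankK Hxy mem_enum.
    by move=> /(_ isT); rewrite /= !Het.
  by apply/ffunP => i; rewrite !ffunE enum_valK.
move=> [h]; rewrite inE => /forallP Hh ->; apply/pbE.
pose i0 := Ordinal H0.
exists (fun k => [ffun i => h (enum_val i)] (insubd i0 k)).
have Ei (i : 'I_#|F|) : insubd i0 i = i by apply: val_inj; rewrite val_insubd ltn_ord.
split; first by move=> i; rewrite Ei.
apply/sat_bigAnd; split=> // ij; rewrite mem_filter => /andP[Hij _] /=.
rewrite !Ei !ffunE; move: (Hh (enum_val ij.1)) => /forallP /(_ (enum_val ij.2)) /implyP; exact.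
Qed.

Definition K1 : fin_graph := @FGraph unit (fun _ _ => false) (fun _ _ => erefl) (fun _ => erefl).

Lemma hom0 (F G : fin_graph) : #|F| = 0 -> hom F G = 1.
Proof.
move=> F0; rewrite /hom -[RHS](expn0 #|G|) -F0 -card_ffun -cardsT; apply: eq_card => h.
rewrite !inE; apply/forallP => x; have := card0_eq F0 x; by rewrite inE.
Qed.

Lemma partB (G : nat -> fin_graph) : QF_convergent G -> L_convergent G.
Proof.
move=> qc F; case: (posnP #|F|) => [F0|Fp].
  apply: (@conv_ext _ (fun _ => R1)); last exact: conv_const.
  by move=> n; rewrite hom0 // F0 expn0 /Rdiv Rinv_1 Rmult_1_r.
apply: (@conv_ext _ (fun n => density #|F| (phiF F) (G n))); last first.
  apply: qc; [exact: qf_phiF | exact: fv_phiF].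
by move=> n; rewrite /density hom_card.
Qed.

Definition Top := FAll 0 (FEq 0 0).
Definition sigma j := closeEx (iota 0 j)
  (bigAnd [seq ab <- [seq (a, b) | a <- iota 0 j, b <- iota 0 j] | ab.1 != ab.2]
          (fun ab : nat * nat => FNot (FEq ab.1 ab.2)) Top).

Lemma sentence_sigma j : sentence (sigma j).
Proof.
move=> k; rewrite /sigma free_closeEx => /andP[nk /free_bigAnd [/=|[ab]]].
  by rewrite orbb => /andP[/negbTE ->].
rewrite mem_filter => /andP[_ /allpairsP [[a b] [ha hb ->]]] /= /orP[]/eqP E; subst k.
  by rewrite ha in nk.
by rewrite hb in nk.
Qed.

Lemma sat_sigma (G : fin_graph) (e : nat -> G) j :
  sat (fun x y => fadj x y) e (sigma j) <-> (j <= #|G|)%N.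
Proof.
rewrite /sigma sat_closeEx; split.
  move=> [e' [_ /sat_bigAnd [_ Hd]]].
  have inj : injective (fun i : 'I_j => e' i).
    move=> i i' E; apply/eqP; apply/negPn/negP => ne.
    have := Hd (nat_of_ord i, nat_of_ord i'); rewrite mem_filter /= ne.
    have -> : (nat_of_ord i, nat_of_ord i') \in [seq (a, b) | a <- iota 0 j, b <- iota 0 j].
      by apply/allpairsP; exists (nat_of_ord i, nat_of_ord i'); rewrite !mem_iota /= !ltn_ord.
    by move=> /(_ isT); apply.
  by have := leq_card _ inj; rewrite card_ord.
move=> hj; exists (fun k => if k < j then nth (e 0) (enum G) k else e k); split.
  by move=> k; rewrite mem_iota add0n /= => /negbTE ->.
apply/sat_bigAnd; split=> [x|ab]; first by [].
rewrite mem_filter => /andP[ne /allpairsP [[a b] [ha hb E]]]; subst ab => /=.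
rewrite mem_iota add0n /= in ha; rewrite mem_iota add0n /= in hb.
rewrite ha hb => /eqP; rewrite nth_uniq ?enum_uniq -?cardE //.
  by move/eqP => E; rewrite /= E eqxx in ne.
exact: leq_trans ha hj.
exact: leq_trans hb hj.
Qed.

Lemma homK1 (G : fin_graph) : hom K1 G = #|G|.
Proof.
rewrite /hom -[RHS](expn1 #|G|) -(card_unit) -card_ffun -cardsT; apply: eq_card => h.
by rewrite !inE; apply/forallP => x; apply/forallP.
Qed.
Local Open Scope R_scope.

Lemma uK1 (G : fin_graph) :
  Rdiv (INR (hom K1 G)) (INR (expn #|G| #|K1|)) = if (0 < #|G|)%N then R1 else R0.
Proof.
rewrite homK1 /= card_unit expn1; case: posnP => [->|Gp].
  by rewrite /= /Rdiv Rmult_0_l.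
rewrite /Rdiv Rinv_r //; apply: not_0_INR; apply/eqP; by rewrite -lt0n.
Qed.

Lemma fmodels_ne (G : fin_graph) (x0 : G) th : sentence th ->
  (fmodels G th <-> sat (fun x y => fadj x y) (fun _ => x0) th).
Proof.
move=> sth; split=> [H|H e]; first exact: H.
exact: (proj1 (@sentence_indep _ _ th (fun _ => x0) e sth) H).
Qed.

Lemma invG_conv (G : nat -> fin_graph) (H : cnt_graph) :
  elem_converges G H -> L_convergent G -> convergent (fun n => Rinv (INR #|G n|)).
Proof.
move=> ec lc.
have [l Hl] := lc K1.
have [N1 HN1] := Hl (/2)%R ltac:(lra).
have Hu n := uK1 (G n).
have dist n : (n >= N1)%coq_nat -> (Rabs ((if (0 < #|G n|)%N then R1 else R0) - l) < /2)%R.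
  by move=> hn; have := HN1 n hn; rewrite /R_dist Hu.
case: (posnP #|G N1|) => [e0|p0].
  apply: (@conv_evt _ (fun _ => R0)); last exact: conv_const.
  exists N1 => n /leP hn; have := dist n hn; have := dist N1 (le_n _); rewrite e0 /=.
  case: posnP => [->|_] /=; first by rewrite Rinv_0.
  move=> h1 h2; exfalso; move: h1 h2; rewrite /Rminus; split_Rabs; lra.
have ne n : (N1 <= n)%N -> (0 < #|G n|)%N.
  move=> /leP hn; have := dist n hn; have := dist N1 (le_n _); rewrite p0 /=.
  case: posnP => [_|//] /=; move=> h1 h2; exfalso; move: h1 h2; rewrite /Rminus; split_Rabs; lra.
pose Ev j := exists N, forall n, (N <= n)%N -> (j <= #|G n|)%N.
have dich j : Ev j \/ exists N, forall n, (N <= n)%N -> (#|G n| < j)%N.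
  have sj := @sentence_sigma j.
  case: (@cmodels_dich H _ sj) => Hc.
    left; have [N HN] := proj1 (ec _ sj) Hc.
    exists (maxn N N1) => n hn.
    have hN : (N <= n)%N by apply: leq_trans hn; rewrite leq_maxl.
    have hN1 : (N1 <= n)%N by apply: leq_trans hn; rewrite leq_maxr.
    have [x0 _] := card_gt0P (ne n hN1).
    by have := HN n hN (fun _ => x0); move/sat_sigma.
  right; have [N HN] := proj1 (ec _ (fun k (h : free (FNot (sigma j)) k) => sj k h)) Hc.
  exists (maxn N N1) => n hn.
  have hN : (N <= n)%N by apply: leq_trans hn; rewrite leq_maxl.
  have hN1 : (N1 <= n)%N by apply: leq_trans hn; rewrite leq_maxr.
  have [x0 _] := card_gt0P (ne n hN1).
  have := HN n hN (fun _ => x0) => /= Hn; rewrite ltnNge; apply/negP => hj; apply: Hn.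
  exact/sat_sigma.
case: (classic (forall j, Ev j)) => [Hall|Hnot].
  exists R0 => eps Heps; have [J [HJ J0]] := archimed_cor1 eps Heps.
  have [N HN] := Hall J.
  exists (maxn N N1) => n /leP hn.
  have hN : (N <= n)%N by apply: leq_trans hn; rewrite leq_maxl.
  have hJ := HN n hN.
  have J0' : 0 < INR J by apply: lt_0_INR.
  have le1 : INR J <= INR #|G n| by apply: le_INR; apply/leP.
  have gp : 0 < INR #|G n| by lra.
  have := Rinv_le_contravar _ _ J0' le1.
  have := Rinv_0_lt_compat _ gp.
  rewrite /R_dist Rminus_0_r; split_Rabs; lra.
have [j Hj] := not_all_ex_not _ _ Hnot.
have : exists c, exists N, forall n, (N <= n)%N -> #|G n| = c.
  elim: j Hj => [|j IH] Hj.
    by exfalso; apply: Hj; exists 0%N.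
  case: (dich j.+1) => [//|[N HN]].
  case: (classic (Ev j)) => [[N' HN']|/IH //].
  exists j, (maxn N N'); move=> n hn; apply/eqP; rewrite eqn_leq.
  rewrite -ltnS HN ?HN' //; apply: leq_trans hn; by rewrite ?leq_maxl ?leq_maxr.
move=> [c [N HN]]; apply: (@conv_evt _ (fun _ => Rinv (INR c))); last exact: conv_const.
by exists N => n hn; rewrite HN.
Qed.
Close Scope R_scope.

Definition ext (G : fin_graph) p (t : {ffun 'I_p.+1 -> G}) : nat -> G := fun k => t (inord k).
Definition dens (G : fin_graph) p (P : {ffun 'I_p.+1 -> G} -> Prop) : R :=
  Rdiv (INR #|[set t | pb (P t)]|) (INR (expn #|G| p.+1)).
Definition gadj (G : fin_graph) := fun x y : G => is_true (fadj x y).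

Lemma ext_ord (G : fin_graph) p (t : {ffun 'I_p.+1 -> G}) (i : 'I_p.+1) : ext t i = t i.
Proof. by rewrite /ext inord_val. Qed.
Lemma ext_lt (G : fin_graph) p (t : {ffun 'I_p.+1 -> G}) k (hk : (k < p.+1)%N) : ext t k = t (Ordinal hk).
Proof. by rewrite /ext; congr (t _); apply: val_inj; rewrite /= inordK. Qed.

Lemma density_dens (G : fin_graph) p f : fv_below p.+1 f ->
  density p.+1 f G = dens (fun t : {ffun 'I_p.+1 -> G} => sat (@gadj G) (ext t) f).
Proof.
move=> fvf; rewrite /density /dens; congr Rdiv; congr INR.
apply: eq_card => t; rewrite !inE; apply: pb_iff; split.
  move=> [e [He Hs]]; apply: (proj1 (@sat_ext _ _ e (ext t) f _) Hs) => k /fvf hk.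
  by rewrite (ext_lt t hk) -He.
by move=> Hs; exists (ext t); split => // i; rewrite ext_ord.
Qed.

Lemma dens_ext (G : fin_graph) p (P Q : {ffun 'I_p.+1 -> G} -> Prop) :
  (forall t, P t <-> Q t) -> dens P = dens Q.
Proof.
move=> E; rewrite /dens; congr Rdiv; congr INR; apply: eq_card => t; rewrite !inE.
exact: pb_iff.
Qed.

Lemma pb_and (P Q : Prop) : pb (P /\ Q) = pb P && pb Q.
Proof.
apply/pb_eq; split=> [[hp hq]|/andP[/pbE hp /pbE hq]] //.
by rewrite (proj2 (pbE P) hp) (proj2 (pbE Q) hq).
Qed.
Lemma pb_not (P : Prop) : pb (~ P) = ~~ pb P.
Proof.
apply/pb_eq; split=> [hp|/negP hp]; last by move/pbE.
by apply/negP => /pbE.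
Qed.

Lemma dens_split (G : fin_graph) p (P Q : {ffun 'I_p.+1 -> G} -> Prop) :
  dens P = Rplus (dens (fun t => P t /\ Q t)) (dens (fun t => P t /\ ~ Q t)).
Proof.
rewrite /dens -Rdiv_plus_distr -plus_INR; congr Rdiv; congr INR.
rewrite -(cardID [set t | pb (Q t)] [set t | pb (P t)]); congr addn; apply: eq_card => t;
  rewrite !inE ?pb_and ?pb_not //.
by rewrite andbC.
Qed.

Definition atomF p (a : bool * 'I_p * 'I_p) : form :=
  if a.1.1 then FAdj a.1.2 a.2 else FEq a.1.2 a.2.

Lemma sat_atom (G : fin_graph) p (t : {ffun 'I_p.+1 -> G}) b i j :
  sat (@gadj G) (ext t) (atomF (b, i, j)) <-> (if b then is_true (fadj (t i) (t j)) else t i = t j).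
Proof. by rewrite /atomF; case: b => /=; rewrite !ext_ord. Qed.

Definition er p (S : seq (bool * 'I_p.+1 * 'I_p.+1)) : rel 'I_p.+1 :=
  fun i j => ((false, i, j) \in S) || ((false, j, i) \in S).
Definition ar p (S : seq (bool * 'I_p.+1 * 'I_p.+1)) : rel 'I_p.+1 :=
  fun i j => ((true, i, j) \in S) || ((true, j, i) \in S).
Lemma er_sym p S : symmetric (@er p S). Proof. by move=> i j; rewrite /er orbC. Qed.
Lemma ar_sym p S : symmetric (@ar p S). Proof. by move=> i j; rewrite /ar orbC. Qed.
Definition rt (p : nat) (S : seq (bool * 'I_p.+1 * 'I_p.+1)) := root (@er p S).
Definition KV (p : nat) (S : seq (bool * 'I_p.+1 * 'I_p.+1)) := {i : 'I_p.+1 | @rt p S i == i}.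
Definition kadj (p : nat) (S : seq (bool * 'I_p.+1 * 'I_p.+1)) (u v : KV S) : bool :=
  (val u != val v) && [exists i, exists j, ar S i j && (rt S i == val u) && (rt S j == val v)].
Lemma kadj_sym (p : nat) (S : seq (bool * 'I_p.+1 * 'I_p.+1)) : symmetric (@kadj p S).
Proof.
move=> u v; rewrite /kadj eq_sym; congr andb.
apply/existsP/existsP => -[i /existsP [j /andP[/andP [h1 h2] h3]]];
  exists j; apply/existsP; exists i; by rewrite ar_sym h1 h2 h3.
Qed.
Lemma kadj_irr (p : nat) (S : seq (bool * 'I_p.+1 * 'I_p.+1)) : irreflexive (@kadj p S).
Proof. by move=> u; rewrite /kadj eqxx. Qed.
Definition Kg (p : nat) (S : seq (bool * 'I_p.+1 * 'I_p.+1)) : fin_graph := @FGraph (KV S) (@kadj p S) (@kadj_sym p S) (@kadj_irr p S).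

Lemma csym (p : nat) (S : seq (bool * 'I_p.+1 * 'I_p.+1)) : connect_sym (er S).
Proof. exact: sym_connect_sym (@er_sym p S). Qed.

Lemma allS_iff (G : fin_graph) (p : nat) (S : seq (bool * 'I_p.+1 * 'I_p.+1)) (t : {ffun 'I_p.+1 -> G}) :
  (forall a, a \in S -> sat (@gadj G) (ext t) (atomF a)) <->
  (forall i, t i = t (rt S i)) /\ (forall i j, ar S i j -> fadj (t i) (t j)).
Proof.
split=> [H|[h1 h2] [[b i] j] hin].
  split.
    move=> i; pose a := [pred z | t z == t i].
    have cl : closed (er S) a.
      move=> x y /orP [h|h]; rewrite !inE.
        by have := H _ h; move/sat_atom => ->.
      by have := H _ h; move/sat_atom => ->.
    have := closed_connect cl (connect_root (er S) i); rewrite !inE eqxx => /esym /eqP.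
    by move=> ->.
  move=> i j /orP [h|h].
    by have := H _ h; move/sat_atom.
  by have := H _ h; move/sat_atom; rewrite fadj_sym.
apply/sat_atom; case: b hin => hin.
  by apply: h2; rewrite /ar hin.
have : connect (er S) i j by apply: connect1; rewrite /er hin.
move/(rootP (csym S)) => E; by rewrite h1 (h1 j) /rt E.
Qed.

Lemma count_loop (G : fin_graph) (p : nat) (S : seq (bool * 'I_p.+1 * 'I_p.+1)) :
  [exists i, exists j, ar S i j && (rt S i == rt S j)] ->
  #|[set t : {ffun 'I_p.+1 -> G} | pb (forall a, a \in S -> sat (@gadj G) (ext t) (atomF a))]| = 0%N.
Proof.
move=> /existsP [i /existsP [j /andP [hij /eqP E]]].
apply/eqP; rewrite cards_eq0; apply/eqP/setP => t; rewrite !inE; apply/pbF.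
move/allS_iff => [h1 h2]; have := h2 _ _ hij; by rewrite h1 (h1 j) E fadj_irr.
Qed.

Definition toK (p : nat) (S : seq (bool * 'I_p.+1 * 'I_p.+1)) (i : 'I_p.+1) : KV S :=
  exist _ (rt S i) (introT eqP (root_root (csym S) i)).

Lemma count_base (G : fin_graph) (p : nat) (S : seq (bool * 'I_p.+1 * 'I_p.+1)) :
  ~~ [exists i, exists j, ar S i j && (rt S i == rt S j)] ->
  #|[set t : {ffun 'I_p.+1 -> G} | pb (forall a, a \in S -> sat (@gadj G) (ext t) (atomF a))]| = hom (Kg S) G.
Proof.
move=> nl.
pose M := fun s : {ffun KV S -> G} => [ffun i : 'I_p.+1 => s (toK S i)].
have tKv (u : KV S) : toK S (val u) = u by apply: val_inj => /=; apply/eqP; exact: (valP u).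
have injM : injective M.
  move=> s1 s2 E; apply/ffunP => u.
  have := congr1 (fun t : {ffun 'I_p.+1 -> G} => t (val u)) E; by rewrite !ffunE tKv.
rewrite /hom -(card_imset _ injM); apply: eq_card => t; rewrite !inE.
apply/idP/imsetP.
  move=> /pbE /allS_iff [h1 h2].
  exists [ffun u : KV S => t (val u)].
    rewrite inE; apply/forallP => u; apply/forallP => v; apply/implyP => /andP[_].
    move=> /existsP [i /existsP [j /andP [/andP [hij /eqP Ei] /eqP Ej]]].
    by rewrite !ffunE -Ei -Ej -!h1; apply: h2.
  by apply/ffunP => i; rewrite !ffunE /= -h1.
move=> [s]; rewrite inE => /forallP Hs ->; apply/pbE/allS_iff; split.
  by move=> i; rewrite !ffunE; congr (s _); apply: val_inj; rewrite /= /rt root_root //; exact: csym.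
move=> i j hij; rewrite !ffunE.
have := Hs (toK S i) => /forallP /(_ (toK S j)) /implyP; apply.
rewrite /kadj /=; apply/andP; split.
  apply/negP => /eqP E; move/negP: nl; apply; apply/existsP; exists i; apply/existsP; exists j.
  by rewrite hij; apply/eqP; exact: E.
by apply/existsP; exists i; apply/existsP; exists j; rewrite hij !eqxx.
Qed.

Lemma INR_muln m n : INR (m * n) = Rmult (INR m) (INR n).
Proof. by rewrite -mult_INR. Qed.
Lemma INR_expn m n : INR (expn m n) = pow (INR m) n.
Proof. elim: n => [|n IH]; first by rewrite expn0. by rewrite expnS INR_muln IH. Qed.

Lemma base_conv (G : nat -> fin_graph) (H : cnt_graph) (p : nat) (S : seq (bool * 'I_p.+1 * 'I_p.+1)) :
  elem_converges G H -> L_convergent G ->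
  convergent (fun n => dens (fun t : {ffun 'I_p.+1 -> G n} =>
                               forall a, a \in S -> sat (@gadj (G n)) (ext t) (atomF a))).
Proof.
move=> ec lc; case: (boolP [exists i, exists j, ar S i j && (rt S i == rt S j)]) => [lp|nl].
  apply: (@conv_ext _ (fun _ => R0)); last exact: conv_const.
  by move=> n; rewrite /dens count_loop // /Rdiv Rmult_0_l.
have hq : (#|Kg S| <= p.+1)%N.
  rewrite /= /KV card_sig; apply: leq_trans (max_card _) _; by rewrite card_ord.
pose r := (p.+1 - #|Kg S|)%N.
apply: (@conv_ext _ (fun n => Rmult (Rdiv (INR (hom (Kg S) (G n))) (INR (expn #|G n| #|Kg S|)))
                                    (pow (Rinv (INR #|G n|)) r))); last first.
  apply: conv_mult; first exact: lc.
  apply: conv_pow; exact: invG_conv ec lc.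
move=> n; rewrite /dens count_base // -{1}(subnKC hq) expnD INR_muln -/r !INR_expn.
by rewrite /Rdiv Rinv_mult pow_inv; ring.
Qed.

Fixpoint fsize (f : form) : nat :=
  match f with
  | FNot g => (fsize g).+1
  | FAnd g h | FOr g h => (fsize g + fsize h).+1
  | _ => 1
  end.
Lemma fsize_gt0 f : (0 < fsize f)%N. Proof. by case: f. Qed.

Definition PS (G : fin_graph) (p : nat) (L : seq form) (S : seq (bool * 'I_p.+1 * 'I_p.+1))
  (t : {ffun 'I_p.+1 -> G}) : Prop :=
  (forall g, List.In g L -> sat (@gadj G) (ext t) g) /\
  (forall a, a \in S -> sat (@gadj G) (ext t) (atomF a)).

Lemma PS_cons (G : fin_graph) p g L S (t : {ffun 'I_p.+1 -> G}) :
  PS (g :: L) S t <-> sat (@gadj G) (ext t) g /\ PS L S t.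
Proof.
rewrite /PS /=; split=> [[H1 H2]|[H0 [H1 H2]]].
  by split; [apply: H1; left | split => // h hin; apply: H1; right].
by split=> // h [<-|/H1].
Qed.

Lemma listC (G : nat -> fin_graph) (H : cnt_graph) (p : nat) :
  elem_converges G H -> L_convergent G ->
  forall n0 L S, (sumn (map fsize L) < n0)%N ->
  (forall g, List.In g L -> qf g /\ fv_below p.+1 g) ->
  convergent (fun n => dens (fun t : {ffun 'I_p.+1 -> G n} => PS L S t)).
Proof.
move=> ec lc; elim=> [//|n0 IH] L S.
case: L => [|g L] hs hL.
  apply: (@conv_ext _ _ _ (base_conv S ec lc)) => n; apply: dens_ext => t.
  by rewrite /PS /=; split=> [[]|] //.
have hL' : forall h, List.In h L -> qf h /\ fv_below p.+1 h by move=> h hh; apply: hL; right.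
have [qg fvg] := hL g (or_introl erefl).
have hsL : (sumn (map fsize L) < n0)%N.
  by move: hs; rewrite /= ltnS => h; apply: leq_trans h; rewrite -{1}(add0n (sumn _)) ltn_add2r fsize_gt0.
move: hs qg fvg hL; case: g => [i j|i j|g|g h|g h|i g|i g] hs qg fvg hL.
- have hi : (i < p.+1)%N by apply: fvg; rewrite /= eqxx.
  have hj : (j < p.+1)%N by apply: fvg; rewrite /= eqxx orbT.
  apply: (@conv_ext _ _ _ (IH L ((true, Ordinal hi, Ordinal hj) :: S) hsL hL')) => n.
  apply: dens_ext => t; rewrite PS_cons /PS; split=> [[h0 [h1 h2]]|[h1 h2]].
    by split=> // a; rewrite in_cons => /orP[/eqP->|/h2].
  split; first by apply: (h2 (true, Ordinal hi, Ordinal hj)); rewrite mem_head.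
  by split=> // a ha; apply: h2; rewrite in_cons ha orbT.
- have hi : (i < p.+1)%N by apply: fvg; rewrite /= eqxx.
  have hj : (j < p.+1)%N by apply: fvg; rewrite /= eqxx orbT.
  apply: (@conv_ext _ _ _ (IH L ((false, Ordinal hi, Ordinal hj) :: S) hsL hL')) => n.
  apply: dens_ext => t; rewrite PS_cons /PS; split=> [[h0 [h1 h2]]|[h1 h2]].
    by split=> // a; rewrite in_cons => /orP[/eqP->|/h2].
  split; first by apply: (h2 (false, Ordinal hi, Ordinal hj)); rewrite mem_head.
  by split=> // a ha; apply: h2; rewrite in_cons ha orbT.
-
  have hgL : (sumn (map fsize (g :: L)) < n0)%N by move: hs; rewrite /= addSn ltnS.
  have hL2 : forall h, List.In h (g :: L) -> qf h /\ fv_below p.+1 h.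
    by move=> h [<-|/hL'] //; split.
  have C1 := IH L S hsL hL'; have C2 := IH (g :: L) S hgL hL2.
  apply: (@conv_ext _ _ _ (conv_minus C1 C2)) => n.
  rewrite (@dens_split _ _ (fun t : {ffun 'I_p.+1 -> G n} => PS L S t) (fun t => sat (@gadj (G n)) (ext t) g)).
  have -> : dens (fun t : {ffun 'I_p.+1 -> G n} => PS (FNot g :: L) S t) =
            dens (fun t : {ffun 'I_p.+1 -> G n} => PS L S t /\ ~ sat (@gadj (G n)) (ext t) g).
    by apply: dens_ext => t; rewrite PS_cons /=; tauto.
  have -> : dens (fun t : {ffun 'I_p.+1 -> G n} => PS (g :: L) S t) =
            dens (fun t : {ffun 'I_p.+1 -> G n} => PS L S t /\ sat (@gadj (G n)) (ext t) g).
    by apply: dens_ext => t; rewrite PS_cons; tauto.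
  ring.
-
  have hgL : (sumn (map fsize (g :: h :: L)) < n0)%N by move: hs; rewrite /= addSn ltnS addnA.
  move/andP: qg => [qg qh].
  have hL2 : forall x, List.In x (g :: h :: L) -> qf x /\ fv_below p.+1 x.
    move=> x [<-|[<-|/hL'//]]; split=> // k hk; apply: fvg; by rewrite /= hk ?orbT.
  apply: (@conv_ext _ _ _ (IH _ S hgL hL2)) => n; apply: dens_ext => t.
  rewrite !PS_cons /=; tauto.
-
  move/andP: qg => [qg qh].
  have hgL : (sumn (map fsize (g :: L)) < n0)%N.
    move: hs; rewrite /= addSn ltnS => h'; apply: leq_ltn_trans h'.
    by rewrite leq_add2r leq_addr.
  have hhL : (sumn (map fsize (h :: L)) < n0)%N.
    move: hs; rewrite /= addSn ltnS => h'; apply: leq_ltn_trans h'.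
    by rewrite leq_add2r leq_addl.
  have hghL : (sumn (map fsize (g :: h :: L)) < n0)%N by move: hs; rewrite /= addSn ltnS addnA.
  have hL2 : forall x, List.In x (g :: h :: L) -> qf x /\ fv_below p.+1 x.
    move=> x [<-|[<-|/hL'//]]; split=> // k hk; apply: fvg; by rewrite /= hk ?orbT.
  have C1 := IH (g :: L) S hgL (fun x hx => hL2 x (match hx with or_introl e => or_introl e | or_intror e => or_intror (or_intror e) end)).
  have C2 := IH (h :: L) S hhL (fun x hx => hL2 x (or_intror hx)).
  have C3 := IH (g :: h :: L) S hghL hL2.
  apply: (@conv_ext _ _ _ (conv_minus (conv_plus C1 C2) C3)) => n.
  rewrite (@dens_split _ _ (fun t : {ffun 'I_p.+1 -> G n} => PS (FOr g h :: L) S t) (fun t => sat (@gadj (G n)) (ext t) g)).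
  rewrite (@dens_split _ _ (fun t : {ffun 'I_p.+1 -> G n} => PS (h :: L) S t) (fun t => sat (@gadj (G n)) (ext t) g)).
  have -> : dens (fun t : {ffun 'I_p.+1 -> G n} => PS (FOr g h :: L) S t /\ sat (@gadj (G n)) (ext t) g) =
            dens (fun t : {ffun 'I_p.+1 -> G n} => PS (g :: L) S t).
    by apply: dens_ext => t; rewrite !PS_cons /=; tauto.
  have -> : dens (fun t : {ffun 'I_p.+1 -> G n} => PS (FOr g h :: L) S t /\ ~ sat (@gadj (G n)) (ext t) g) =
            dens (fun t : {ffun 'I_p.+1 -> G n} => PS (h :: L) S t /\ ~ sat (@gadj (G n)) (ext t) g).
    by apply: dens_ext => t; rewrite !PS_cons /=; tauto.
  have -> : dens (fun t : {ffun 'I_p.+1 -> G n} => PS (h :: L) S t /\ sat (@gadj (G n)) (ext t) g) =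
            dens (fun t : {ffun 'I_p.+1 -> G n} => PS (g :: h :: L) S t).
    by apply: dens_ext => t; rewrite !PS_cons /=; tauto.
  ring.
- by [].
- by [].
Qed.

Lemma qf_free f : qf f -> exists k, free f k.
Proof.
elim: f => [i j|i j|g IH|g IHg h IHh|g IHg h IHh|i g _|i g _] /= hq //.
- by exists i; rewrite eqxx.
- by exists i; rewrite eqxx.
- exact: IH.
- move/andP: hq => [/IHg [k hk] _]; by exists k; rewrite hk.
- move/andP: hq => [/IHg [k hk] _]; by exists k; rewrite hk.
Qed.

Lemma partC (G : nat -> fin_graph) (H : cnt_graph) :
  elem_converges G H -> L_convergent G -> QF_convergent G.
Proof.
move=> ec lc p f qf fv; case: p fv => [|p] fv.
  by have [k hk] := qf_free qf; have := fv k hk.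
apply: (@conv_ext _ (fun n => dens (fun t : {ffun 'I_p.+1 -> G n} => PS [:: f] [::] t))).
  move=> n; rewrite density_dens //; apply: dens_ext => t; rewrite PS_cons /PS /=.
  by split=> [h|[h _]] //; split=> //; split=> // g [].
apply: (listC ec lc (n0 := (fsize f + 0).+1)) => //.
by move=> g [<-|[]].
Qed.

Theorem lemma5p8 (G : nat -> fin_graph) (H : cnt_graph) :
  elem_converges G H -> ultra_homogeneous H ->
  (FO_convergent G <-> QF_convergent G) /\ (QF_convergent G <-> L_convergent G).
Proof.
move=> ec uh.
have QFO : QF_convergent G -> FO_convergent G.
  move=> qc [|p] f fv.
    have fv1 : fv_below 1 f by move=> k /fv.
    apply: (@conv_ext _ (fun n => density 1 f (G n))); last exact: (@partA G H 1 f isT ec uh qc fv1).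
    by move=> n; apply: dens01.
  exact: (@partA G H p.+1 f isT ec uh qc fv).
split; split.
- by move=> fo p f _ fv; apply: fo.
- exact: QFO.
- exact: partB.
- exact: partC ec.
Qed.
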